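(* Let $S=K[x_1,\ldots,x_n]$ and let $I$ be a square-free monomial ideal of $S$ of degree $2$. Then $I$ is an $f$-ideal which is not of $l$ type for any $l$ if and only if the graph $T=\overline{\tau(G(I))}$ satisfies all of: (1) for each $i\in[n]$, $d(v_i)<n-1$ in $T$; (2) $\omega(T)=2$; (3) $|E(T)|=\frac12 C_n^2$; (4) $T$ is not bipartite.
   Context: $K$ is a field; $G(I)$ is the minimal monomial generating set; ''of degree 2'' means all elements of $G(I)$ have degree 2. With $\sigma$ the bijection $x_{i_1}\cdots x_{i_k}\mapsto\{i_1,\ldots,i_k\}$, the facet complex $\delta_{\mathcal{F}}(I)$ has facets $\sigma(g)$, $g\in G(I)$, the Stanley–Reisner complex is $\delta_{\mathcal{N}}(I)=\{\sigma(g)\mid g \text{ square-free monomial},\ g\notin I\}$, and $I$ is an $f$-ideal if both have the same $f$-vector. For a nonempty proper $B\subset[n]$ with complement $\overline B$, $W_B=\{x_ix_j\mid i\ne j,\ i,j\in B \text{ or } i,j\in\overline B\}$; $I$ is of $l$ type if $W_B\subseteq G(I)$ for some $B$ with $|B|=l$. $\tau(A)$, for a set $A$ of degree-2 square-free monomials, is the graph on $v_1,\ldots,v_n$ with edge $v_iv_j$ iff $x_ix_j\in A$; $\overline{\tau(A)}$ is its complement graph, $d(v)$ is vertex degree, $\omega$ is clique number, $E(T)$ is the edge set, $C_n^2$ the binomial coefficient. *)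

(* Defs.v *)
From mathcomp Require Import all_boot all_order all_algebra.
Set Implicit Arguments. Unset Strict Implicit. Unset Printing Implicit Defensive.

(* A square-free monomial x_{i_1}...x_{i_k} of S = K[x_1..x_n] is identified,
   via sigma, with its support {i_1,...,i_k} : {set 'I_n}.  A square-free
   monomial ideal I of degree 2 is given by its minimal monomial generating
   set G(I) : {set {set 'I_n}} (images under sigma), all of cardinality 2. *)

Section Defs.
Variable n : nat.
Implicit Types (G : {set {set 'I_n}}) (F B : {set 'I_n}).

Definition sqfree_deg2_gens G : Prop := forall g, g \in G -> #|g| = 2.

(* a square-free monomial (with support F) lies in I iff some generator divides it *)
Definition sqfree_in_ideal G F : bool := [exists g in G, g \subset F].

Definition facet_complex G : {set {set 'I_n}} :=
  [set F : {set 'I_n} | [exists g in G, F \subset g]].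

Definition SR_complex G : {set {set 'I_n}} :=
  [set F : {set 'I_n} | ~~ sqfree_in_ideal G F].

(* f_{k-1}(D) = number of faces of cardinality k *)
Definition fnum (D : {set {set 'I_n}}) (k : nat) : nat :=
  #|[set F in D | #|F| == k]|.

Definition f_ideal G : Prop :=
  forall k, fnum (facet_complex G) k = fnum (SR_complex G) k.

Definition W_B B : {set {set 'I_n}} :=
  [set e : {set 'I_n} | (#|e| == 2) && ((e \subset B) || (e \subset ~: B))].

Definition of_l_type G (l : nat) : Prop :=
  exists B : {set 'I_n}, [/\ B != set0, B != setT, #|B| = l & W_B B \subset G].

Definition Tadj G : rel 'I_n := fun i j => (i != j) && ([set i; j] \notin G).

Definition Tdeg G (i : 'I_n) : nat := #|[set j | Tadj G i j]|.

Definition is_clique G (C : {set 'I_n}) : bool :=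
  [forall i in C, forall j in C, (i != j) ==> Tadj G i j].

Definition clique_number G : nat := \max_(C : {set 'I_n} | is_clique G C) #|C|.

Definition T_edges G : {set {set 'I_n}} :=
  [set e : {set 'I_n} | [exists i, exists j, Tadj G i j && (e == [set i; j])]].

Definition bipartite G : Prop :=
  exists A : {set 'I_n}, forall i j, Tadj G i j -> (i \in A) != (j \in A).

End Defs.

(* Main.v *)
Require Import Defs.
From mathcomp Require Import all_boot all_order all_algebra.
From mathcomp Require Import zify.
Set Implicit Arguments. Unset Strict Implicit. Unset Printing Implicit Defensive.

Section Aux.
Variable n : nat.
Variable G : {set {set 'I_n}}.
Hypothesis HG : sqfree_deg2_gens G.

Lemma in_ideal_card F : sqfree_in_ideal G F -> 2 <= #|F|.
Proof. case/exists_inP=> g gG gF. rewrite -(HG gG). exact: subset_leq_card. Qed.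

Lemma in_T_edges e : (e \in T_edges G) = (#|e| == 2) && (e \notin G).
Proof.
apply/idP/idP.
- rewrite inE => /existsP[i /existsP[j /andP[/andP[ij nG] /eqP->]]].
  by rewrite cards2 ij nG.
- case/andP=> /cards2P[i [j [ij ->]]] nG. rewrite inE; apply/existsP; exists i.
  apply/existsP; exists j. by rewrite /Tadj ij nG eqxx.
Qed.

Lemma card_Tedges : #|T_edges G| + #|G| = 'C(n, 2).
Proof.
have -> : T_edges G = [set e : {set 'I_n} | #|e| == 2] :\: G.
  by apply/setP=> e; rewrite in_T_edges !inE andbC.
have sub : G \subset [set e : {set 'I_n} | #|e| == 2].
  by apply/subsetP=> g gG; rewrite inE HG.
by rewrite cardsD (setIidPr sub) subnK ?subset_leq_card // card_draws card_ord.
Qed.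

Lemma fnum_facet2 : fnum (facet_complex G) 2 = #|G|.
Proof.
rewrite /fnum. congr (#|pred_of_set _|). apply/setP=> F; rewrite !inE; apply/idP/idP.
- case/andP=> /exists_inP[g gG Fg] /eqP F2.
  have: F == g by rewrite eqEcard Fg (HG gG) F2.
  by move/eqP->.
- move=> FG; rewrite HG // andbT; apply/exists_inP; by exists F.
Qed.

Lemma fnum_SR2 : fnum (SR_complex G) 2 = #|T_edges G|.
Proof.
rewrite /fnum; congr (#|pred_of_set _|); apply/setP=> F; rewrite in_T_edges !inE.
case F2: (#|F| == 2); rewrite ?andbF ?andbT //=.
rewrite /sqfree_in_ideal; congr negb; apply/exists_inP/idP.
- case=> g gG gF. have: g == F by rewrite eqEcard gF (HG gG) (eqP F2).
  by move/eqP<-.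
- by move=> FG; exists F.
Qed.

Lemma SR1 : [set F in SR_complex G | #|F| == 1] = [set F : {set 'I_n} | #|F| == 1].
Proof.
apply/setP=> F; rewrite !inE. case F1: (#|F| == 1); rewrite ?andbT ?andbF //.
by apply/negP => /in_ideal_card; rewrite (eqP F1).
Qed.

Lemma card1 : #|[set F : {set 'I_n} | #|F| == 1]| = n.
Proof. by rewrite card_draws card_ord bin1. Qed.

Lemma SR0 : [set F in SR_complex G | #|F| == 0] = [set set0].
Proof.
apply/setP=> F; rewrite !inE cards_eq0.
case: (F =P set0) => [->|_]; rewrite ?andbT ?andbF //.
by apply/negP => /in_ideal_card; rewrite cards0.
Qed.

Lemma facet0 g : g \in G -> [set F in facet_complex G | #|F| == 0] = [set set0].
Proof.
move=> gG; apply/setP=> F; rewrite !inE cards_eq0.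
case: (F =P set0) => [->|_]; rewrite ?andbT ?andbF //.
by apply/exists_inP; exists g; rewrite ?sub0set.
Qed.

Lemma fnum_facet_big k : 2 < k -> fnum (facet_complex G) k = 0.
Proof.
move=> k2; apply/eqP; rewrite cards_eq0; apply/eqP/setP=> F; rewrite !inE.
apply/negbTE/negP => /andP[/exists_inP[g gG Fg] /eqP Fk].
have := subset_leq_card Fg; rewrite (HG gG) Fk; lia.
Qed.

Lemma Tadj_sym i j : Tadj G i j = Tadj G j i.
Proof. by rewrite /Tadj eq_sym setUC. Qed.

Lemma clique_SR C : is_clique G C -> ~~ sqfree_in_ideal G C.
Proof.
move=> cC; apply/exists_inP => -[g gG gC].
have /cards2P[x [y [xy gE]]] : #|g| == 2 by rewrite HG.
move: gC; rewrite gE => /subsetP s.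
have := (forall_inP cC) x (s x (set21 x y)).
move/forall_inP/(_ y (s y (set22 x y))); rewrite xy /= /Tadj xy /= -gE gG.
done.
Qed.

Lemma fnum_SR_big k : (forall C, is_clique G C -> #|C| <= 2) -> 2 < k ->
  fnum (SR_complex G) k = 0.
Proof.
move=> cb k2; apply/eqP; rewrite cards_eq0; apply/eqP/setP=> F; rewrite !inE.
apply/negbTE/negP => /andP[nI /eqP Fk].
suff : is_clique G F by move/cb; rewrite Fk; lia.
apply/forall_inP => i iF; apply/forall_inP => j jF; apply/implyP => ij.
rewrite /Tadj ij /=. apply/negP => pG. apply: (negP nI); apply/exists_inP.
exists [set i; j] => //; apply/subsetP => x; rewrite !inE => /orP[]/eqP-> //.
Qed.

Lemma deg_fwd i j : j != i -> [set i; j] \in G -> Tdeg G i < n - 1.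
Proof.
move=> ji ijG. have e : #|[set~ i]| = n - 1 by rewrite cardsC1 card_ord subn1.
rewrite /Tdeg -e; apply: proper_card; apply/properP; split.
- by apply/subsetP=> k; rewrite !inE /Tadj => /andP[ik _]; rewrite eq_sym.
- by exists j; rewrite !inE /Tadj ?ijG ?andbF.
Qed.

Lemma deg_bwd i : Tdeg G i < n - 1 -> exists2 j, j != i & [set i; j] \in G.
Proof.
move=> d. have e : #|[set~ i]| = n - 1 by rewrite cardsC1 card_ord subn1.
have : ~~ ([set~ i] \subset [set k | Tadj G i k]).
  apply/negP => /subset_leq_card h; rewrite e in h; rewrite /Tdeg in d; lia.
case/subsetPn => k; rewrite !inE /Tadj => ki.
rewrite eq_sym ki /= negbK => kG. by exists k.
Qed.

Lemma cov_of_facet i : [exists g in G, [set i] \subset g] ->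
  exists2 j, j != i & [set i; j] \in G.
Proof.
case/exists_inP => g gG; rewrite sub1set.
have /cards2P[x [y [xy gE]]] : #|g| == 2 by rewrite HG.
rewrite gE !inE => /orP[]/eqP ->.
- by exists y; rewrite 1?eq_sym // -gE.
- by exists x => //; rewrite setUC -gE.
Qed.

Lemma facet1 (cov : forall i, exists2 j, j != i & [set i; j] \in G) :
  [set F in facet_complex G | #|F| == 1] = [set F : {set 'I_n} | #|F| == 1].
Proof.
apply/setP=> F; rewrite !inE. case F1: (#|F|==1); rewrite ?andbF ?andbT //.
case/cards1P: F1 => i ->. case: (cov i) => j _ ijG.
apply/exists_inP; exists [set i; j] => //. by rewrite sub1set set21.
Qed.

Lemma pair_clique i j : Tadj G i j -> is_clique G [set i; j].
Proof.
move=> h; apply/forall_inP => x; rewrite !inE => /orP[]/eqP->;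
apply/forall_inP => y; rewrite !inE => /orP[]/eqP->; rewrite ?eqxx //=;
by rewrite ?h ?implybT // Tadj_sym h implybT.
Qed.

End Aux.

Theorem lemma4p5 (K : fieldType) (n : nat) (G : {set {set 'I_n}}) :
  sqfree_deg2_gens G ->
  (f_ideal G /\ (forall l, ~ of_l_type G l)) <->
  [/\ (forall i : 'I_n, Tdeg G i < n - 1),
      clique_number G = 2,
      2 * #|T_edges G| = 'C(n, 2)
    & ~ bipartite G].
Proof.
move=> HG; have cT := card_Tedges HG; split.
- case=> fI nl.
  have f0 := fI 0; have f1 := fI 1; have f2 := fI 2.
  rewrite /fnum (SR0 HG) cards1 in f0.
  have : 0 < #|[set F in facet_complex G | #|F| == 0]| by rewrite f0.
  case/card_gt0P => F0; rewrite !inE => /andP[/exists_inP[g gG _] _].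
  have n2 : 2 <= n by have := max_card g; rewrite card_ord (HG g gG).
  have cov : forall i, exists2 j, j != i & [set i; j] \in G.
    move=> i; apply: (cov_of_facet HG).
    rewrite /fnum (SR1 HG) card1 in f1.
    have sub : [set F in facet_complex G | #|F| == 1] \subset
               [set F : {set 'I_n} | #|F| == 1].
      by apply/subsetP => F; rewrite !inE => /andP[].
    have eqA : [set F in facet_complex G | #|F| == 1] =
               [set F : {set 'I_n} | #|F| == 1].
      by apply/eqP; rewrite eqEcard sub card1 f1 leqnn.
    have : [set i] \in [set F in facet_complex G | #|F| == 1].
      by rewrite eqA inE cards1.
    by rewrite !inE => /andP[].
  rewrite (fnum_facet2 HG) (fnum_SR2 HG) in f2.
  have E2 : 2 * #|T_edges G| = 'C(n, 2) by lia.
  have : 0 < #|T_edges G|.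
    have := bin_gt0 n 2; rewrite n2; lia.
  case/card_gt0P => e; rewrite (in_T_edges G) => /andP[/cards2P[i [j [ij ->]]] nG].
  have Tij : Tadj G i j by rewrite /Tadj ij nG.
  split => //.
  + by move=> i0; case: (cov i0) => j0; apply: deg_fwd.
  + apply/eqP; rewrite eqn_leq; apply/andP; split.
    * apply/bigmax_leqP => C cC. rewrite leqNgt; apply/negP => C3.
      have := fI #|C|; rewrite (fnum_facet_big HG C3) => e0.
      have : 0 < fnum (SR_complex G) #|C|.
        by apply/card_gt0P; exists C; rewrite !inE (clique_SR HG cC) eqxx.
      by rewrite -e0.
    * have cl := pair_clique Tij.
      have := @leq_bigmax_cond _ _ (fun C : {set 'I_n} => #|C|) _ cl.
      by rewrite /= cards2 ij.
  + case=> A HA. apply: (nl #|A|); exists A; split => //.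
    * apply/eqP=> A0; have := HA _ _ Tij; by rewrite A0 !inE.
    * apply/eqP=> A0; have := HA _ _ Tij; by rewrite A0 !inE.
    * apply/subsetP => e'; rewrite inE => /andP[/cards2P[x [y [xy ->]]] sub].
      apply/negPn/negP => nG'.
      have Hxy : Tadj G x y by rewrite /Tadj xy nG'.
      have := HA x y Hxy.
      case/orP: sub => /subsetP s; move: (s x (set21 x y)) (s y (set22 x y));
        rewrite ?inE.
      - by move=> -> ->.
      - by move=> /negbTE -> /negbTE ->.
- case=> Hdeg Hcl Hedge Hbip; split.
  + have cb : forall C, is_clique G C -> #|C| <= 2.
      by move=> C cC; rewrite -Hcl; exact: (@leq_bigmax_cond _ _ (fun C : {set 'I_n} => #|C|) _ cC).
    have n2 : 2 <= n.
      rewrite leqNgt; apply/negP => n1.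
      have : clique_number G <= 1.
        apply/bigmax_leqP => C _; have := max_card C; rewrite card_ord; lia.
      by rewrite Hcl.
    have : 0 < #|G|.
      have := bin_gt0 n 2; rewrite n2; lia.
    case/card_gt0P => g gG.
    have cov : forall i, exists2 j, j != i & [set i; j] \in G.
      by move=> i; exact: (deg_bwd (Hdeg i)).
    case=> [|[|[|k]]].
    * by rewrite /fnum (SR0 HG) (facet0 gG).
    * by rewrite /fnum (SR1 HG) (facet1 cov).
    * rewrite (fnum_facet2 HG) (fnum_SR2 HG); lia.
    * by rewrite (fnum_facet_big HG) ?(fnum_SR_big cb).
  + move=> l [B [_ _ _ sub]]. apply: Hbip; exists B => i j.
    rewrite /Tadj => /andP[ij nG]. apply/negP => /eqP e.
    move/negP: nG; apply; apply: (subsetP sub).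
    rewrite inE cards2 ij /=.
    case iB: (i \in B) in e *.
    * apply/orP; left; apply/subsetP=> x; rewrite !inE => /orP[]/eqP->;
        by rewrite ?iB -?e.
    * apply/orP; right; apply/subsetP=> x; rewrite !inE => /orP[]/eqP->;
        by rewrite ?iB -?e.
Qed.
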